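(* Let $f$ be a complex polynomial of degree $d>1$ and let $K(f)=\{z\in\mathbb{C}:(f^k(z))_k \text{ is bounded}\}$ be its filled-in Julia set. Then the sequence of iterates $(f^k)_{k\ge1}$, where $f^k=f\circ\cdots\circ f$ ($k$ times), centers on $K(f)$.
   Context: Definition (centering): Let $C\subset\mathbb{C}$ be non-empty and compact. A sequence of polynomials $(q_k)_k$ centers on $C$ if there exist $R>0$ and $k_0$ such that (1) all zeros of $q_k$ lie in $\mathbb{D}(0,R)$ for $k\ge k_0$; (2) for every closed $L\subset\mathbb{C}$ with $L\cap C=\emptyset$ there is $M(L)$ such that the number of zeros of $q_k$ in $L$ (with multiplicity) is at most $M(L)$ for $k\ge k_0$. *)

(* Defs.v *)
From HB Require Import structures.
From mathcomp Require Import all_boot all_order all_algebra.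
From mathcomp Require Import reals.
From mathcomp Require Import complex.
Set Implicit Arguments. Unset Strict Implicit. Unset Printing Implicit Defensive.
Import Order.TTheory GRing.Theory Num.Theory.
Local Open Scope ring_scope.
Local Open Scope complex_scope.

Section Defs.
Variable R : realType.
Notation C := (complex R).

Definition closedC (L : C -> Prop) : Prop :=
  forall z : C, (forall e : R, 0 < e -> exists w, L w /\ `|z - w| < e%:C) -> L z.

Definition poly_iter (f : {poly C}) (k : nat) : {poly C} :=
  iter k (fun p => f \Po p) 'X.

Definition filled_julia (f : {poly C}) (z : C) : Prop :=
  exists B : R, forall k : nat, `|iter k (fun w => f.[w]) z| <= B%:C.

(* "the number of zeros of q in L, counted with multiplicity, is at most M":
   for every finite set of distinct points of L, the sum of multiplicities
   of q at these points is at most M. *)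
Definition nzeros_in_le (q : {poly C}) (L : C -> Prop) (M : nat) : Prop :=
  forall s : seq C, uniq s -> (forall x, x \in s -> L x) ->
    (\sum_(x <- s) mup x q <= M)%N.

Definition centers_on (q : nat -> {poly C}) (C0 : C -> Prop) : Prop :=
  exists Rad : R, 0 < Rad /\ exists k0 : nat,
    (forall k, (k0 <= k)%N -> forall z, root (q k) z -> `|z| < Rad%:C) /\
    (forall L : C -> Prop, closedC L -> (forall z, L z -> ~ C0 z) ->
       exists M : nat, forall k, (k0 <= k)%N -> nzeros_in_le (q k) L M).
End Defs.

(* Main.v *)
Require Import Defs.
From HB Require Import structures.
From mathcomp Require Import all_boot all_order all_algebra.
From mathcomp Require Import reals.
From mathcomp Require Import complex.
From mathcomp Require Import all_classical all_reals all_analysis.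
From mathcomp Require Import zify ring lra.
Import Order.TTheory GRing.Theory Num.Theory.
Import numFieldNormedType.Exports.
Local Open Scope ring_scope.

Section BWsec.
Local Open Scope classical_set_scope.
Lemma BW2 (R : realType) (B : R) (u : nat -> R * R) :
  (forall n, `|(u n).1| <= B /\ `|(u n).2| <= B) ->
  exists p : R * R, forall e : R, 0 < e -> forall N : nat,
    exists n, (N <= n)%N /\ `|(u n).1 - p.1| < e /\ `|(u n).2 - p.2| < e.
Proof.
move=> hB.
have cpt : compact (`[-B, B]%classic `*` `[-B, B]%classic).
  by apply: compact_setX; apply: segment_compact.
have Fb : (u @ \oo) (`[-B, B]%classic `*` `[-B, B]%classic).
  exists 0%N => // n _ /=; have [h1 h2] := hB n.
  by split; rewrite /= in_itv /= -ler_norml.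
have [p [_ cl]] := cpt (u @ \oo) _ Fb.
exists p => e e0 N.
have := cl [set x | exists2 n, (N <= n)%N & x = u n] (ball p e).
case.
- by exists N => // n /= Nn; exists n.
- exact: nbhsx_ballx.
move=> x [[n Nn ->]] [/= b1 b2]; exists n; split => //.
by move: b1 b2; rewrite /ball /= !(distrC (u n).1) !(distrC (u n).2).
Qed.

End BWsec.

Lemma sum_mup_le (F : fieldType) (s : seq F) (q : {poly F}) :
  uniq s -> q != 0 -> ((\sum_(x <- s) mup x q)%N <= (size q).-1)%N.
Proof.
elim: s q => [|x s IH] q /=; first by rewrite big_nil.
move=> /andP[xs us] q0; rewrite big_cons.
have [m [r]] := multiplicity_XsubC q x; rewrite q0 /= => rx qE.
have r0 : r != 0 by apply: contraNneq rx => ->; rewrite root0.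
have e0 : ('X - x%:P) ^+ m != 0 by rewrite expf_neq0 // polyXsubC_eq0.
have -> : mup x q = m by rewrite qE mupMr // mup_XsubCX eqxx.
have -> : \sum_(y <- s) mup y q = \sum_(y <- s) mup y r.
  rewrite big_seq_cond [RHS]big_seq_cond; apply: eq_bigr => y /andP[ys _].
  rewrite qE mupM // mup_XsubCX.
  by case: eqP => [exy|]; [rewrite exy ys in xs | rewrite addn0].
have := IH r us r0.
rewrite qE size_Mmonic ?monicXsubC ?monic_exp ?monicXsubC ?size_exp_XsubC //.
have : (0 < size r)%N by rewrite size_poly_gt0.
case: (size r) => // n _ /=; rewrite addnS /= ; move: (\sum_(y <- s) mup y r) => S h; lia.
Qed.



Section Main.
Local Open Scope complex_scope.
Section Nrm.
Context {R : realType}.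
Notation C := (complex R).

Definition nrm (z : C) : R := Num.sqrt ((complex.Re z)^+2 + (complex.Im z)^+2).

Lemma normE (z : C) : `|z| = (nrm z)%:C.
Proof. exact: normc_def. Qed.

Lemma nrm_ge0 z : 0 <= nrm z.
Proof. exact: sqrtr_ge0. Qed.

Lemma nrm_le (z : C) r : (`|z| <= r%:C) = (nrm z <= r).
Proof. by rewrite normE lecR. Qed.

Lemma nrm_lt (z : C) r : (`|z| < r%:C) = (nrm z < r).
Proof. by rewrite normE ltcR. Qed.

Lemma nrmD x y : nrm (x + y) <= nrm x + nrm y.
Proof. by rewrite -lecR -!normE rmorphD /= -!normE ler_normD. Qed.

Lemma nrmM x y : nrm (x * y) = nrm x * nrm y.
Proof. by apply: complexI; rewrite rmorphM /= -!normE normrM. Qed.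

Lemma nrmX x n : nrm (x ^+ n) = nrm x ^+ n.
Proof. by apply: complexI; rewrite rmorphXn /= -!normE normrX. Qed.

Lemma nrmN x : nrm (- x) = nrm x.
Proof. by apply: complexI; rewrite -!normE normrN. Qed.

Lemma nrm_eq0 x : nrm x = 0 -> x = 0.
Proof. by move=> h; apply/normr0_eq0; rewrite normE h. Qed.

Lemma nrm0 : nrm 0 = 0.
Proof. by apply: complexI; rewrite -normE normr0. Qed.

Lemma nrm_sum (I : Type) (s : seq I) (F : I -> C) :
  nrm (\sum_(i <- s) F i) <= \sum_(i <- s) nrm (F i).
Proof.
elim: s => [|i s IH]; first by rewrite !big_nil nrm0.
rewrite !big_cons; apply: le_trans (nrmD _ _) _; exact: lerD.
Qed.

Lemma nrm_real (a : R) : nrm a%:C = `|a|.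
Proof. by rewrite /nrm /= expr0n /= addr0 sqrtr_sqr. Qed.

Lemma nrm_ReIm (a b : R) : nrm (a +i* b) <= `|a| + `|b|.
Proof.
have -> : a +i* b = a%:C + 'i * b%:C by apply/eqP; rewrite eq_complex /=; apply/andP; split; apply/eqP; ring.
apply: le_trans (nrmD _ _) _; rewrite nrmM !nrm_real.
have -> : nrm 'i = 1 by rewrite /nrm /= expr0n /= add0r expr1n sqrtr1.
by rewrite mul1r.
Qed.

Lemma Re_nrm (z : C) : `|complex.Re z| <= nrm z.
Proof.
rewrite /nrm -sqrtr_sqr; apply: ler_wsqrtr; rewrite lerDl; exact: sqr_ge0.
Qed.

Lemma Im_nrm (z : C) : `|complex.Im z| <= nrm z.
Proof.
rewrite /nrm -sqrtr_sqr; apply: ler_wsqrtr; rewrite lerDr; exact: sqr_ge0.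
Qed.


Lemma escape (f : {poly C}) : (1 < (size f).-1)%N ->
  exists T : R, 1 <= T /\ forall z, T < nrm z -> 2 * nrm z <= nrm f.[z].
Proof.
move=> hd; set d := (size f).-1 in hd.
have sf : size f = d.+1 by move: hd; rewrite /d; case: (size f).
have f0 : f != 0 by rewrite -size_poly_gt0 sf.
have a0 : f`_d != 0 by have := lead_coef_eq0 f; rewrite lead_coefE -/d (negbTE f0) => ->.
set na := nrm f`_d.
have na0 : 0 < na.
  rewrite lt_neqAle nrm_ge0 andbT; apply/eqP => h.
  by move/eqP: a0; apply; apply: nrm_eq0.
set S := \sum_(i < d) nrm f`_i.
have S0 : 0 <= S by apply: sumr_ge0 => i _; exact: nrm_ge0.
set q := (S + 2) / na.
have qna : q * na = S + 2 by rewrite /q divfK // gt_eqF.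
have q0 : 0 <= q by rewrite /q divr_ge0 // ?ltW //; lra.
exists (1 + q); split; first lra.
move=> z hz; set nz := nrm z in hz *.
have z1 : 1 <= nz by lra.
rewrite horner_coef sf big_ord_recr /=.
set A := \sum_(i < d) _.
have hA : nrm A <= S * nz ^+ d.-1.
  apply: le_trans (nrm_sum _ _ _) _; rewrite /S big_distrl /=.
  apply: ler_sum => i _; rewrite nrmM nrmX; apply: ler_wpM2l; first exact: nrm_ge0.
  apply: ler_weXn2l => //; have := ltn_ord i; rewrite /d; lia.
have hB : nrm (f`_d * z ^+ d) = na * nz * nz ^+ d.-1.
  by rewrite nrmM nrmX -mulrA -exprS prednK //; lia.
have hAB : nrm (f`_d * z ^+ d) <= nrm (A + f`_d * z ^+ d) + nrm A.
  have := nrmD (A + f`_d * z ^+ d) (- A); rewrite nrmN.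
  by rewrite addrC addKr.
have hP : nz <= nz ^+ d.-1.
  by rewrite -{1}(expr1 nz); apply: ler_weXn2l => //; lia.
have h : 0 < na * (nz - (1 + q)) by apply: mulr_gt0; lra.
have nzna : S + 2 <= na * nz by nra.
nra.
Qed.


Lemma cont_lower (p : {poly C}) (y : C) (T : R) : T < nrm p.[y] ->
  exists2 e : R, 0 < e & forall x, nrm (x - y) < e -> T < nrm p.[x].
Proof.
move=> hT.
have [q hq] : exists q, p - p.[y]%:P = q * ('X - y%:P).
  by apply/factor_theorem; rewrite /root !hornerE subrr.
set Q := \sum_(i < size q) nrm q`_i * (nrm y + 1) ^+ i.
have Q0 : 0 <= Q.
  apply: sumr_ge0 => i _; apply: mulr_ge0; first exact: nrm_ge0.
  apply: exprn_ge0; have := nrm_ge0 y; lra.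
set g := nrm p.[y] - T.
have g0 : 0 < g by rewrite /g; lra.
exists (g / (Q + 1 + g)).
  by apply: divr_gt0 => //; lra.
move=> x hx.
have hd : g / (Q + 1 + g) * (Q + 1 + g) = g by rewrite divfK // gt_eqF //; lra.
set e := g / (Q + 1 + g) in hx hd.
have e0 : 0 <= e by rewrite /e divr_ge0 //; lra.
have e1 : e <= 1 by nra.
have hxy : p.[x] - p.[y] = q.[x] * (x - y).
  by have := congr1 (fun r => r.[x]) hq; rewrite /= !hornerE.
have nx : nrm x <= nrm y + 1.
  have := nrmD (x - y) y; rewrite subrK; lra.
have hqx : nrm q.[x] <= Q.
  rewrite horner_coef; apply: le_trans (nrm_sum _ _ _) _.
  apply: ler_sum => i _; rewrite nrmM nrmX; apply: ler_wpM2l; first exact: nrm_ge0.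
  by apply: lerXn2r => //; rewrite qualifE /= ?nrm_ge0 //; have := nrm_ge0 y; lra.
have h1 : nrm p.[y] <= nrm p.[x] + nrm (q.[x] * (x - y)).
  by have := nrmD p.[x] (- (p.[x] - p.[y])); rewrite nrmN -hxy opprB addrC subrK addrC.
rewrite nrmM in h1.
have := nrm_ge0 (x - y); have := nrm_ge0 q.[x].
rewrite /g in hd g0 *.
nra.
Qed.


Lemma iterP (f : {poly C}) k z : (poly_iter f k).[z] = iter k (fun w => f.[w]) z.
Proof.
elim: k => [|k IH] /=; first by rewrite /poly_iter /= hornerX.
by rewrite -IH /poly_iter /= horner_comp.
Qed.

End Nrm.
End Main.


Lemma mup_le_size (F : fieldType) (x : F) (q : {poly F}) : (mup x q <= size q)%N.
Proof. by rewrite /mup -ltnS; exact: ltn_ord. Qed.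

Theorem mainTheorem10 (R : realType) (f : {poly complex R}) :
  (1 < (size f).-1)%N ->
  centers_on (fun k => poly_iter f k.+1) (filled_julia f).
Proof.
move=> hd.
have [T [T1 hT]] := @escape R f hd.
set fi := fun k z => iter k (fun w => f.[w]) z.
have esc_iter : forall z, T < nrm z -> forall j, T < nrm (fi j z).
  move=> z hz; elim => [|j IH] //=.
  have := hT _ IH; rewrite /fi /=; lra.
have esc_nz : forall z N, T < nrm (fi N z) -> forall j, (N <= j)%N -> fi j z != 0.
  move=> z N hN j hj; have -> : fi j z = fi (j - N)%N (fi N z) by rewrite /fi -iterD subnK.
  apply/eqP => h; have := esc_iter _ hN (j - N)%N; rewrite h nrm0; lra.
have notK : forall z, ~ filled_julia f z -> exists N, T < nrm (fi N z).
  move=> z hz; apply: contrapT => hn; apply: hz; exists T => k.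
  rewrite nrm_le leNgt; apply/negP => hk; apply: hn; by exists k.
have rootB : forall k z, root (poly_iter f k.+1) z -> nrm z <= T.
  move=> k z; rewrite leNgt; apply: contraL => hz.
  rewrite /root iterP; exact: (esc_nz z 0%N hz k.+1 (leq0n _)).
exists (T + 1); split; first lra.
exists 0%N; split.
  by move=> k _ z /rootB hz; rewrite nrm_lt; lra.
move=> L hL hLK.
have [k1 hk1] : exists k1, forall k, (k1 <= k)%N -> forall z, L z -> ~~ root (poly_iter f k.+1) z.
  apply: contrapT => H.
  have H' : forall n, exists p : nat * complex R, (n <= p.1)%N /\ L p.2 /\ root (poly_iter f p.1.+1) p.2.
    move=> n; apply: contrapT => hn; apply: H; exists n => k nk z Lz; apply/negP => r.
    by apply: hn; exists (k, z).
  have [g hg] := choice H'.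
  pose u n := (complex.Re (g n).2, complex.Im (g n).2).
  have [p hp] : exists p : R * R, forall e : R, 0 < e -> forall N : nat,
      exists n, (N <= n)%N /\ `|(u n).1 - p.1| < e /\ `|(u n).2 - p.2| < e.
    apply: (@BW2 R T) => n; have [_ [_ /rootB hr]] := hg n.
    by split; apply: le_trans hr; [exact: Re_nrm | exact: Im_nrm].
  pose w := Complex p.1 p.2.
  have dist : forall n, nrm ((g n).2 - w) <= `|(u n).1 - p.1| + `|(u n).2 - p.2|.
    by move=> n; rewrite /u /w; case: (g n).2 => a b /=; exact: nrm_ReIm.
  have Lw : L w.
    apply: hL => e e0; have e2 : 0 < e / 2 by lra.
    have [n [_ [h1 h2]]] := hp _ e2 0%N.
    have [_ [Lg _]] := hg n; exists (g n).2; split => //.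
    rewrite nrm_lt -nrmN opprB; have := dist n; lra.
  have [N hN] := notK w (hLK w Lw).
  rewrite /fi -iterP in hN.
  have [e e0 he] := cont_lower _ _ _ hN.
  have e2 : 0 < e / 2 by lra.
    have [n [Nn [h1 h2]]] := hp _ e2 N.
  have [kn [Lg rg]] := hg n.
  have hx : T < nrm (fi N (g n).2) by rewrite /fi -iterP; apply: he; have := dist n; lra.
  have hle : (N <= (g n).1.+1)%N by apply: leqW (leq_trans Nn kn).
  have := esc_nz _ _ hx _ hle; rewrite /fi -iterP.
  by move: rg; rewrite /root => /eqP ->; rewrite eqxx.
exists (\sum_(k < k1) size (poly_iter f k.+1))%N => k _ s us sL.
have [kk1|k1k] := ltnP k k1.
  have [q0|q0] := eqVneq (poly_iter f k.+1) 0.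
    rewrite big1_seq // => x _; have := mup_le_size _ x (poly_iter f k.+1).
    by rewrite q0 size_poly0 leqn0 => /eqP.
  apply: leq_trans (sum_mup_le _ _ _ us q0) _; apply: leq_trans (leq_pred _) _.
  by rewrite (bigD1 (Ordinal kk1)) //= leq_addr.
rewrite big1_seq // => x /andP[_ xs]; apply: mupNroot; exact: hk1 k1k x (sL x xs).
Qed.
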